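(* Let $f:[0,1]\to[0,1]$ be a surjective continuous function that does not admit a splitting sequence. If $f$ admits two 2-cycles $\{s,t\}$ and $\{u,v\}$ with $s<t$, $u<v$ and $s<u$, then there is exactly one component $C$ of $f^{-1}([s,u])$ such that $f(C)=[s,u]$, and there is exactly one component $C'$ of $f^{-1}([v,t])$ such that $f(C')=[v,t]$.
   Context: A 2-cycle is a set $\{s,t\}$ with $s\ne t$, $f(s)=t$, $f(t)=s$. A sequence $(T_n)_{n\in\mathbb N}$ of closed intervals $T_n\subsetneq[0,1]$ (possibly degenerate) is tight if $f(T_{n+1})=T_n$ for every $n$ and $T_n$ is nondegenerate for all sufficiently large $n$. A tight sequence $(T_n)$, $T_n=[l_n,r_n]$, is a splitting sequence admitted by $f$ if there are an infinite set $N\subseteq\mathbb N$ and nondegenerate closed intervals $S_n\subseteq[0,1]$ ($n\in N$) with $S_n\cap T_n\subseteq\{l_n,r_n\}$ and $f(S_n)=f(T_n)$ for all $n\in N$. *)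

(* Defs.v *)
From HB Require Import structures.
From mathcomp Require Import all_boot all_order all_algebra.
From mathcomp Require Import all_classical all_reals all_analysis.
Set Implicit Arguments. Unset Strict Implicit. Unset Printing Implicit Defensive.
Import Order.TTheory GRing.Theory Num.Theory.
Import numFieldNormedType.Exports.
Local Open Scope classical_set_scope.
Local Open Scope ring_scope.

Definition I01 {R : realType} : set R := `[0, 1]%classic.

Definition two_cycle {R : realType} (f : R -> R) (s t : R) : Prop :=
  I01 s /\ I01 t /\ s <> t /\ f s = t /\ f t = s.

Definition tight {R : realType} (f : R -> R) (l r : nat -> R) : Prop :=
  (forall n, l n <= r n /\ `[l n, r n]%classic `<=` I01 /\ `[l n, r n]%classic <> I01) /\
  (forall n, f @` `[l n.+1, r n.+1]%classic = `[l n, r n]%classic) /\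
  (exists N, forall n, (N <= n)%N -> l n < r n).

Definition splitting_seq {R : realType} (f : R -> R) (l r : nat -> R) : Prop :=
  tight f l r /\
  exists (N : set nat) (a b : nat -> R),
    infinite_set N /\
    forall n, N n ->
      [/\ a n < b n, `[a n, b n]%classic `<=` I01,
          `[a n, b n]%classic `&` `[l n, r n]%classic `<=` [set l n; r n]
        & f @` `[a n, b n]%classic = f @` `[l n, r n]%classic].

Definition admits_splitting_seq {R : realType} (f : R -> R) : Prop :=
  exists l r : nat -> R, splitting_seq f l r.

Definition component_of {R : realType} (A C : set R) : Prop :=
  exists2 x, A x & C = connected_component A x.

(* Main.v *)
Require Import Defs.
From mathcomp Require Import all_boot all_order all_algebra.
From mathcomp Require Import all_classical all_reals all_analysis.
From mathcomp Require Import lra.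
Import Order.TTheory GRing.Theory Num.Theory.
Import numFieldNormedType.Exports.
Local Open Scope classical_set_scope.
Local Open Scope ring_scope.

Lemma sup_closed_mem (R : realType) (S : set R) :
  closed S -> S !=set0 -> has_ubound S -> S (sup S).
Proof.
move=> cS S0 ub; have := closure_sup S0 ub.
by rewrite -(proj1 (closure_id S) cS).
Qed.

Lemma inf_closed_mem (R : realType) (S : set R) :
  closed S -> S !=set0 -> has_lbound S -> S (inf S).
Proof.
move=> cS [x Sx] [m lbm].
have E : [set - x | x in S] = (-%R) @^-1` S.
  apply/seteqP; split => [z [w Sw <-]|z Sz]; first by rewrite /= opprK.
  by exists (- z); rewrite ?opprK.
have : [set - x | x in S] (sup [set - x | x in S]).
  apply: sup_closed_mem.
  - by rewrite E; move: cS; apply: (proj1 (continuous_closedP _)); exact: opp_continuous.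
  - by exists (- x); exists x.
  - exists (- m) => _ [w Sw <-]; rewrite lerN2; exact: lbm.
by case=> w Sw Ew; rewrite /inf -Ew opprK.
Qed.

Lemma closed_level (R : realType) (g : R -> R) (p q c : R) :
  {within `[p, q], continuous g} ->
  closed [set z | z \in `[p, q] /\ g z = c].
Proof.
move=> gc.
have -> : [set z | z \in `[p, q] /\ g z = c] =
   ((from_subspace `[p,q] g) @^-1` `[c, c] : set (subspace `[p,q])) `&` `[p,q].
  apply/seteqP; split => z /=.
    by case=> zin <-; split => //; rewrite in_itv /= lexx.
  by rewrite !in_itv /= -eq_le => -[/eqP -> ->].
rewrite closed_setIS; last exact: interval_closed.
apply: (proj1 (continuous_closedP _) gc).
exact: interval_closed.
Qed.
Lemma sub_itv (R : realType) (x y a b : R) : x <= a -> b <= y ->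
  `[a, b]%classic `<=` `[x, y]%classic.
Proof.
move=> xa yb z /=; rewrite !in_itv /= => /andP[h1 h2].
by rewrite (le_trans xa h1) (le_trans h2 yb).
Qed.

Lemma ivt_up (R : realType) (g : R -> R) (a b v : R) : a <= b ->
  {within `[a, b], continuous g} -> g a <= v <= g b ->
  exists2 c, a <= c <= b & g c = v.
Proof.
move=> ab gc /andP[h1 h2].
have h : g a <= g b by apply: le_trans h2.
have [|c cin gcv] := @IVT _ g a b v ab gc; first by rewrite (min_l h) (max_r h) h1 h2.
by exists c => //; move: cin; rewrite in_itv.
Qed.

Lemma ivt_down (R : realType) (g : R -> R) (a b v : R) : a <= b ->
  {within `[a, b], continuous g} -> g b <= v <= g a ->
  exists2 c, a <= c <= b & g c = v.
Proof.
move=> ab gc /andP[h1 h2].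
have h : g b <= g a by apply: le_trans h2.
have [|c cin gcv] := @IVT _ g a b v ab gc; first by rewrite (min_r h) (max_l h) h1 h2.
by exists c => //; move: cin; rewrite in_itv.
Qed.

Lemma es1 (R : realType) (g : R -> R) (x y c d : R) : x <= y ->
  {within `[x, y], continuous g} -> g x = c -> g y = d -> c <= d ->
  exists a b, [/\ x <= a, a <= b, b <= y & g @` `[a, b]%classic = `[c, d]%classic].
Proof.
move=> xy gc gx gy cd.
pose Sd := [set z | z \in `[x, y] /\ g z = d].
have Sdy : Sd y by split => //; rewrite in_itv /= xy lexx.
have cSd : closed Sd by exact: closed_level.
have lSd : has_lbound Sd by exists x => z [+ _]; rewrite in_itv /= => /andP[].
set b := inf Sd.
have [bin gb] : Sd b by apply: inf_closed_mem => //; exists y.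
have bmin : forall z, Sd z -> b <= z by move=> z Sz; exact: ge_inf.
move: bin; rewrite in_itv /= => /andP[xb] by_.
have gcb : {within `[x, b], continuous g}.
  by apply: continuous_subspaceW gc; apply: sub_itv.
pose Sc := [set z | z \in `[x, b] /\ g z = c].
have Scx : Sc x by split => //; rewrite in_itv /= xb lexx.
have cSc : closed Sc by exact: closed_level.
have uSc : has_ubound Sc by exists b => z [+ _]; rewrite in_itv /= => /andP[].
set a := sup Sc.
have [ain ga] : Sc a by apply: sup_closed_mem => //; exists x.
have amax : forall z, Sc z -> z <= a by move=> z Sz; exact: sup_ubound.
move: ain; rewrite in_itv /= => /andP[xa ab].
exists a, b; split => //.
apply/seteqP; split => [_ [z zin <-]|w].
  move: zin; rewrite /= !in_itv /= => /andP[az zb].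
  apply/andP; split.
    rewrite leNgt; apply/negP => gzc.
    have gcz : {within `[z, b], continuous g}.
      by apply: continuous_subspaceW gcb; apply: sub_itv => //; exact: le_trans az.
    have [|w /andP[zw wb] gw] := @ivt_up _ g z b c zb gcz.
      by rewrite (ltW gzc) gb cd.
    have : w <= a by apply: amax; split => //; rewrite in_itv /= wb (le_trans xa (le_trans az zw)).
    move=> wa; have wz : w = z by apply/eqP; rewrite eq_le zw andbT (le_trans wa az).
    by move: gzc; rewrite -wz gw ltxx.
  rewrite leNgt; apply/negP => gzd.
  have gcz : {within `[x, z], continuous g}.
    by apply: continuous_subspaceW gc; apply: sub_itv => //; exact: le_trans zb by_.
  have xz : x <= z by exact: le_trans xa az.
  have [|w /andP[xw wz] gw] := @ivt_up _ g x z d xz gcz.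
    by rewrite gx cd (ltW gzd).
  have : b <= w.
    apply: bmin; split => //; rewrite in_itv /= xw /=.
    exact: le_trans wz (le_trans zb by_).
  move=> bw; have ewz : w = z by apply/eqP; rewrite eq_le wz /= (le_trans zb bw).
  by move: gzd; rewrite -ewz gw ltxx.
rewrite /= in_itv /= => wcd.
have [|z zin gz] := @ivt_up _ g a b w ab
  (continuous_subspaceW (@sub_itv _ x b a b xa (lexx b)) gcb).
  by rewrite ga gb.
by exists z => //=; rewrite in_itv.
Qed.

Lemma es (R : realType) (f : R -> R) (p q c d : R) : p <= q ->
  {within `[p, q], continuous f} -> c <= d ->
  `[c, d]%classic `<=` f @` `[p, q]%classic ->
  exists a b, [/\ p <= a, a <= b, b <= q & f @` `[a, b]%classic = `[c, d]%classic].
Proof.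
move=> pq fc cd sub.
have [x xin fx] : (f @` `[p, q]%classic) c by apply: sub; rewrite /= in_itv /= lexx cd.
have [y yin fy] : (f @` `[p, q]%classic) d by apply: sub; rewrite /= in_itv /= lexx cd.
move: xin yin; rewrite /= !in_itv /= => /andP[px xq] /andP[py yq].
have [xy|yx] := leP x y.
  have [a [b [xa ab bq E]]] := @es1 _ f x y c d xy
    (continuous_subspaceW (@sub_itv _ p q x y px yq) fc) fx fy cd.
  by exists a, b; split => //; [exact: le_trans xa | exact: le_trans bq yq].
have yx' := ltW yx.
have gc : {within `[y, x], continuous (fun z => - f z)}.
  have fc' := continuous_subspaceW (@sub_itv _ p q y x py xq) fc.
  by move=> z /=; apply/continuousN/fc'.
have e1 : - f y = - d by rewrite fy.
have e2 : - f x = - c by rewrite fx.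
have e3 : - d <= - c by rewrite lerN2.
have [a [b [ya ab bx E]]] := @es1 _ (fun z => - f z) y x (- d) (- c) yx' gc e1 e2 e3.
exists a, b; split => //; [exact: le_trans ya | exact: le_trans bx xq|].
apply/seteqP; split => [_ [z zin <-]|w win].
  have : `[- d, - c]%classic (- f z) by rewrite -E; exists z.
  by rewrite /= !in_itv /= !lerN2 andbC.
have : `[- d, - c]%classic (- w).
  by move: win; rewrite /= !in_itv /= !lerN2 andbC.
by rewrite -E => -[z zin /oppr_inj hz]; exists z.
Qed.

Lemma cover_up (R : realType) (f : R -> R) (p q : R) : p <= q ->
  {within `[p, q], continuous f} ->
  `[f p, f q]%classic `<=` f @` `[p, q]%classic.
Proof.
move=> pq fc w; rewrite /= in_itv /= => h.
have [z zin fz] := @ivt_up _ f p q w pq fc h.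
by exists z => //=; rewrite in_itv.
Qed.

Lemma cover_down (R : realType) (f : R -> R) (p q : R) : p <= q ->
  {within `[p, q], continuous f} ->
  `[f q, f p]%classic `<=` f @` `[p, q]%classic.
Proof.
move=> pq fc w; rewrite /= in_itv /= => h.
have [z zin fz] := @ivt_down _ f p q w pq fc h.
by exists z => //=; rewrite in_itv.
Qed.

Lemma nondeg (R : realType) (f : R -> R) (a b c d : R) : a <= b -> c < d ->
  f @` `[a, b]%classic = `[c, d]%classic -> a < b.
Proof.
move=> ab cd E; rewrite lt_neqAle ab andbT; apply/negP => /eqP eab.
subst b.
have : (f @` `[a, a]%classic) c by rewrite E /= in_itv /= lexx (ltW cd).
case=> z1; rewrite /= in_itv /= -eq_le => /eqP <- fc.
have : (f @` `[a, a]%classic) d by rewrite E /= in_itv /= lexx (ltW cd).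
case=> z2; rewrite /= in_itv /= -eq_le => /eqP <- fd.
by move: cd; rewrite -fc -fd ltxx.
Qed.

Lemma odd_inf : infinite_set [set n : nat | odd n].
Proof.
move=> fin; apply: infinite_nat.
have -> : [set: nat] = (fun k : nat => k.*2.+1) @^-1` [set n : nat | odd n].
  by apply/seteqP; split => k //= _; rewrite odd_double.
apply: finite_preimage fin => i j _ _ /= [] /double_inj; exact.
Qed.

Lemma loop_split (R : realType) (f : R -> R) (fcont : {within I01, continuous f})
  (pa qa pb qb : R) : pa < qa -> pb < qb ->
  `[pa, qa]%classic `<=` I01 -> `[pa, qa]%classic <> I01 ->
  `[pb, qb]%classic `<=` I01 -> `[pb, qb]%classic <> I01 ->
  `[pb, qb]%classic `<=` f @` `[pa, qa]%classic ->
  `[pa, qa]%classic `<=` f @` `[pb, qb]%classic ->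
  (forall l r c d, pb <= l -> l < r -> r <= qb -> pa <= c -> c < d -> d <= qa ->
     f @` `[l, r]%classic = `[c, d]%classic ->
     exists a b, [/\ a < b, `[a, b]%classic `<=` I01,
        `[a, b]%classic `&` `[l, r]%classic `<=` [set l; r]
      & f @` `[a, b]%classic = f @` `[l, r]%classic]) ->
  admits_splitting_seq f.
Proof.
move=> pqa pqb AI AnI BI BnI AB BA hsplit.
pose box (n : nat) : R * R := if odd n then (pb, qb) else (pa, qa).
have boxlt n : (box n).1 < (box n).2 by rewrite /box; case: (odd n).
have boxI n : `[(box n).1, (box n).2]%classic `<=` I01 by rewrite /box; case: (odd n).
have boxnI n : `[(box n).1, (box n).2]%classic <> I01 by rewrite /box; case: (odd n).
have boxcov n : `[(box n).1, (box n).2]%classic `<=` f @` `[(box n.+1).1, (box n.+1).2]%classic.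
  by rewrite /box /=; case: (odd n).
have : forall x : (R * R) * (R * R), exists y : R * R,
   (x.1.1 <= x.1.2 /\ `[x.1.1, x.1.2]%classic `<=` I01 /\ x.2.1 <= x.2.2 /\
    `[x.2.1, x.2.2]%classic `<=` f @` `[x.1.1, x.1.2]%classic) ->
   [/\ x.1.1 <= y.1, y.1 <= y.2, y.2 <= x.1.2 & f @` `[y.1, y.2]%classic = `[x.2.1, x.2.2]%classic].
  move=> [[p q] [c d]] /=.
  have [[pq [sI [cd sub]]]|N] := pselect (p <= q /\ `[p, q]%classic `<=` I01 /\ c <= d /\
    `[c, d]%classic `<=` f @` `[p, q]%classic); last by exists (0, 0).
  have [a [b [pa' ab bq E]]] := @es _ f p q c d pq (continuous_subspaceW sI fcont) cd sub.
  by exists (a, b).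
case/choice => step stepP.
pose T := fix T (n : nat) : R * R :=
  match n with 0 => (pa, qa) | n'.+1 => step (box n'.+1, T n') end.
have TS n : T n.+1 = step (box n.+1, T n) by [].
have inv n : [/\ (T n).1 < (T n).2, (box n).1 <= (T n).1 & (T n).2 <= (box n).2].
  elim: n => [|n [lt1 le1 le2]]; first by rewrite /= lexx.
  have := stepP (box n.+1, T n); rewrite /= -TS => -[].
    split; first exact: ltW.
    split; first exact: boxI.
    split; first exact: ltW.
    move=> w win; apply: boxcov; move: win; rewrite /= !in_itv /= => /andP[h1 h2].
    by rewrite (le_trans le1 h1) (le_trans h2 le2).
  move=> h1 h2 h3 E; split => //.
  exact: (@nondeg _ f _ _ _ _ h2 lt1 E).
have img n : f @` `[(T n.+1).1, (T n.+1).2]%classic = `[(T n).1, (T n).2]%classic.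
  have [lt1 le1 le2] := inv n.
  have := stepP (box n.+1, T n); rewrite /= -TS => -[] //.
  split; first exact: ltW.
  split; first exact: boxI.
  split; first exact: ltW.
  move=> w win; apply: boxcov; move: win; rewrite /= !in_itv /= => /andP[h1 h2].
  by rewrite (le_trans le1 h1) (le_trans h2 le2).
have Tsub n : `[(T n).1, (T n).2]%classic `<=` `[(box n).1, (box n).2]%classic.
  have [_ le1 le2] := inv n.
  move=> w; rewrite /= !in_itv /= => /andP[h1 h2].
  by rewrite (le_trans le1 h1) (le_trans h2 le2).
have : forall n, exists ab : R * R, odd n ->
  [/\ ab.1 < ab.2, `[ab.1, ab.2]%classic `<=` I01,
      `[ab.1, ab.2]%classic `&` `[(T n).1, (T n).2]%classic `<=` [set (T n).1; (T n).2]
    & f @` `[ab.1, ab.2]%classic = f @` `[(T n).1, (T n).2]%classic].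
  case=> [|m]; first by exists (0, 0).
  have [on|ev] := boolP (odd m.+1); last by exists (0, 0).
  have bn : box m.+1 = (pb, qb) by rewrite /box on.
  have bm : box m = (pa, qa) by move: on; rewrite /box /= => /negbTE ->.
  have [lt1 le1 le2] := inv m.+1.
  have [lt1' le1' le2'] := inv m.
  rewrite bn /= in le1 le2; rewrite bm /= in le1' le2'.
  have [a [b [hab habI habD habE]]] := hsplit _ _ _ _ le1 lt1 le2 le1' lt1' le2' (img m).
  by exists (a, b).
case/choice => ab abP.
exists (fun n => (T n).1), (fun n => (T n).2); split.
  split; last by split => //; exists 0%N => n _; have [] := inv n.
  move=> n; have [lt1 _ _] := inv n; split; first exact: ltW.
  split; first by move=> w /Tsub /boxI.
  move=> E; apply: (boxnI n); apply/seteqP; split; first exact: boxI.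
  by rewrite -E; exact: Tsub.
exists [set n | odd n], (fun n => (ab n).1), (fun n => (ab n).2); split.
  exact: odd_inf.
by move=> n on; exact: abP.
Qed.
Lemma itv_connected (R : realType) (a b : R) : connected `[a, b]%classic.
Proof.
apply/connected_intervalP => x y; rewrite /= !in_itv /= => /andP[ax _] /andP[_ yb] z /andP[xz zy].
by rewrite in_itv /= (le_trans ax xz) (le_trans zy yb).
Qed.

Lemma sub_cc (R : realType) (A : set R) (x lo hi : R) :
  `[lo, hi]%classic `<=` A -> `[lo, hi]%classic x ->
  `[lo, hi]%classic `<=` connected_component A x.
Proof. by move=> sub xin; apply: connected_component_max => //; exact: itv_connected. Qed.

Lemma comp_part (R : realType) (f : R -> R) (fcont : {within I01, continuous f})
  (nosplit : ~ admits_splitting_seq f) (p q m M : R) : p < q -> m < M ->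
  `[p, q]%classic `<=` I01 -> `[p, q]%classic <> I01 ->
  `[m, M]%classic `<=` I01 -> `[m, M]%classic <> I01 ->
  `[m, M]%classic `<=` f @` `[p, q]%classic ->
  `[p, q]%classic `<=` f @` `[m, M]%classic ->
  exists! C, component_of (I01 `&` f @^-1` `[p, q]%classic) C /\ f @` C = `[p, q]%classic.
Proof.
move=> pq mM AI AnI BI BnI BA AB.
set A := I01 `&` f @^-1` `[p, q]%classic.
have [a [b [ma ab bM E]]] := @es _ f m M p q (ltW mM) (continuous_subspaceW BI fcont) (ltW pq) AB.
have abA : `[a, b]%classic `<=` A.
  move=> z zin; split; first by apply: BI; apply: (@sub_itv _ m M a b ma bM).
  have : (f @` `[a, b]%classic) (f z) by exists z.
  by rewrite E.
have ain : `[a, b]%classic a by rewrite /= in_itv /= lexx ab.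
have fC1 : f @` connected_component A a = `[p, q]%classic.
  apply/seteqP; split => [_ [z zC <-]|w].
    by have [_ ] := connected_component_sub zC.
  move=> win; have : (f @` `[a, b]%classic) w by rewrite E.
  by case=> z zin <-; exists z => //; exact: (@sub_cc _ _ _ _ _ abA ain).
exists (connected_component A a); split.
  by split => //; exists a => //; apply: abA.
move=> C' [[x Ax ->] fC'].
apply: contrapT => neq; apply: nosplit.
apply: (@loop_split _ f fcont p q m M) => // l r c d ml lr rM pc cd dq Elr.
set D := connected_component A l.
have lrA : `[l, r]%classic `<=` A.
  move=> z zin; split; first by apply: BI; apply: (@sub_itv _ m M l r ml rM).
  have : `[c, d]%classic (f z) by rewrite -Elr; exists z.
  rewrite /= !in_itv /= => /andP[h1 h2].
  by rewrite (le_trans pc h1) (le_trans h2 dq).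
have lin : `[l, r]%classic l by rewrite /= in_itv /= lexx (ltW lr).
have lrD : `[l, r]%classic `<=` D := @sub_cc _ _ _ _ _ lrA lin.
have key : forall y, A y -> f @` connected_component A y = `[p, q]%classic ->
    connected_component A y <> D ->
    exists a0 b0, [/\ a0 < b0, `[a0, b0]%classic `<=` I01,
        `[a0, b0]%classic `&` `[l, r]%classic `<=` [set l; r]
      & f @` `[a0, b0]%classic = f @` `[l, r]%classic].
  move=> y Ay fy neqD.
  have disj : forall z, connected_component A y z -> ~ D z.
    move=> z Cz Dz; apply: neqD.
    by rewrite (same_connected_component Cz) /D (same_connected_component Dz).
  have ccI : connected_component A y `<=` I01.
    by move=> z /connected_component_sub [].
  have [x1 C1x1 fx1] : (f @` connected_component A y) c.
    by rewrite fy /= in_itv /= pc (le_trans (ltW cd) dq).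
  have [x2 C2x2 fx2] : (f @` connected_component A y) d.
    by rewrite fy /= in_itv /= dq (le_trans pc (ltW cd)).
  have Cint := proj1 (connected_intervalP _) (@component_connected _ A y).
  have [lo [hi [lohi sub cov]]] : exists lo hi, [/\ lo <= hi,
      `[lo, hi]%classic `<=` connected_component A y &
      `[c, d]%classic `<=` f @` `[lo, hi]%classic].
    case: (leP x1 x2) => h.
      exists x1, x2; split => //.
        by move=> z; rewrite /= in_itv /= => hz; exact: Cint C1x1 C2x2 z hz.
      have := @cover_up _ f x1 x2 h; rewrite fx1 fx2; apply.
      apply: continuous_subspaceW fcont => z; rewrite /= in_itv /= => hz.
      exact/ccI/(Cint _ _ C1x1 C2x2 z hz).
    have h' := ltW h.
    exists x2, x1; split => //.
      by move=> z; rewrite /= in_itv /= => hz; exact: Cint C2x2 C1x1 z hz.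
    have := @cover_down _ f x2 x1 h'; rewrite fx1 fx2; apply.
    apply: continuous_subspaceW fcont => z; rewrite /= in_itv /= => hz.
    exact/ccI/(Cint _ _ C2x2 C1x1 z hz).
  have lhI : `[lo, hi]%classic `<=` I01 by move=> z /sub /ccI.
  have [a' [b' [la ab' bh E']]] := @es _ f lo hi c d lohi
     (continuous_subspaceW lhI fcont) (ltW cd) cov.
  have ab'' := @nondeg _ f _ _ _ _ ab' cd E'.
  have abs : `[a', b']%classic `<=` `[lo, hi]%classic := @sub_itv _ lo hi a' b' la bh.
  exists a', b'; split => //.
  - by move=> z /abs /lhI.
  - by move=> z [z1 z2]; exfalso; apply: (disj z); [exact/sub/abs | exact: lrD].
  - by rewrite E' Elr.
have [eqD|neqD] := pselect (connected_component A a = D).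
  by apply: (key x Ax fC') => h; apply: neq; rewrite eqD h.
exact: (key a (abA a ain) fC1 neqD).
Qed.

Lemma neqI01 (R : realType) (p q w : R) : I01 w -> ~ `[p, q]%classic w ->
  `[p, q]%classic <> I01.
Proof. by move=> Iw nw E; apply: nw; rewrite E. Qed.

Lemma inI01 (R : realType) (w : R) : 0 <= w -> w <= 1 -> I01 w.
Proof. by move=> h1 h2; rewrite /I01 /= in_itv /= h1 h2. Qed.

Lemma subI01 (R : realType) (p q : R) : 0 <= p -> q <= 1 -> `[p, q]%classic `<=` I01.
Proof. by move=> h1 h2 w; rewrite /= in_itv /= => /andP[h3 h4]; apply: inI01; lra. Qed.

Theorem lemma3p14 (R : realType) (f : R -> R)
  (fcont : {within I01, continuous f})
  (fsurj : f @` I01 = I01)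
  (nosplit : ~ admits_splitting_seq f)
  (s t u v : R)
  (cst : two_cycle f s t) (cuv : two_cycle f u v)
  (hst : s < t) (huv : u < v) (hsu : s < u) :
  (exists! C, component_of (I01 `&` f @^-1` `[s, u]%classic) C /\ f @` C = `[s, u]%classic) /\
  (exists! C', component_of (I01 `&` f @^-1` `[v, t]%classic) C' /\ f @` C' = `[v, t]%classic).
Proof.
clear fsurj.
move: cst cuv => [Is [It [snt [fs ft]]]] [Iu [Iv [unv [fu fv]]]].
move: (Is) (It) (Iu) (Iv); rewrite /I01 /= !in_itv /= => /andP[s0 s1] /andP[t0 t1] /andP[u0 u1] /andP[v0 v1].
have cont (p q : R) : 0 <= p -> q <= 1 -> {within `[p, q], continuous f}.
  by move=> h1 h2; apply: continuous_subspaceW fcont; exact: subI01.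
have nin (p q w : R) : 0 <= w -> w <= 1 -> (w < p \/ q < w) -> `[p, q]%classic <> I01.
  move=> h1 h2 h3; apply: (@neqI01 _ p q w (@inI01 _ w h1 h2)).
  by rewrite /= in_itv /= => /andP[h4 h5]; case: h3 => h3; lra.
have vt : v < t.
  have tv : t != v by apply/eqP => etv; move: hsu; rewrite -ft etv fv ltxx.
  rewrite lt_neqAle eq_sym tv /= leNgt; apply/negP => tltv; apply: nosplit.
  have tu : t != u.
    by apply/eqP => etu; move: (lt_trans hsu huv); rewrite -ft etu fu ltxx.
  case: (ltgtP t u) => [tltu|ultt|etu]; last by rewrite etu eqxx in tu.
  - apply: (@loop_split _ f fcont s t s t) => //.
    + exact: subI01.
    + by apply: (nin _ _ u) => //; right.
    + exact: subI01.
    + by apply: (nin _ _ u) => //; right.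
    + by have := @cover_down _ f s t (ltW hst) (cont _ _ s0 t1); rewrite fs ft.
    + by have := @cover_down _ f s t (ltW hst) (cont _ _ s0 t1); rewrite fs ft.
    move=> l r c d sl lr rt sc cd dt Elr.
    have cov : `[c, d]%classic `<=` f @` `[t, u]%classic.
      move=> w win; apply: (@cover_up _ f t u (ltW tltu) (cont _ _ t0 u1)).
      by move: win; rewrite fu ft /= !in_itv /= => /andP[h1 h2]; apply/andP; split; lra.
    have [a [b [ta ab bu E]]] := @es _ f t u c d (ltW tltu) (cont _ _ t0 u1) (ltW cd) cov.
    exists a, b; split.
    + exact: (@nondeg _ f _ _ _ _ ab cd E).
    + by apply: subI01; lra.
    + move=> w []; rewrite /= !in_itv /= => /andP[h1 h2] /andP[h3 h4]; right; lra.
    + by rewrite E Elr.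
  - apply: (@loop_split _ f fcont s u t v) => //.
    + exact: subI01.
    + by apply: (nin _ _ v) => //; right.
    + exact: subI01.
    + by apply: (nin _ _ s) => //; left.
    + by have := @cover_up _ f s u (ltW hsu) (cont _ _ s0 u1); rewrite fs fu.
    + by have := @cover_up _ f t v (ltW tltv) (cont _ _ t0 v1); rewrite ft fv.
    move=> l r c d tl lr rv sc cd du Elr.
    have cov : `[c, d]%classic `<=` f @` `[u, t]%classic.
      move=> w win; apply: (@cover_down _ f u t (ltW ultt) (cont _ _ u0 t1)).
      by move: win; rewrite fu ft /= !in_itv /= => /andP[h1 h2]; apply/andP; split; lra.
    have [a [b [ua ab bt E]]] := @es _ f u t c d (ltW ultt) (cont _ _ u0 t1) (ltW cd) cov.
    exists a, b; split.
    + exact: (@nondeg _ f _ _ _ _ ab cd E).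
    + by apply: subI01; lra.
    + move=> w []; rewrite /= !in_itv /= => /andP[h1 h2] /andP[h3 h4]; left; lra.
    + by rewrite E Elr.
have cSU : `[v, t]%classic `<=` f @` `[s, u]%classic.
  by have := @cover_down _ f s u (ltW hsu) (cont _ _ s0 u1); rewrite fs fu.
have cVT : `[s, u]%classic `<=` f @` `[v, t]%classic.
  by have := @cover_down _ f v t (ltW vt) (cont _ _ v0 t1); rewrite ft fv.
have n1 : `[s, u]%classic <> I01 by apply: (nin _ _ t) => //; right; lra.
have n2 : `[v, t]%classic <> I01 by apply: (nin _ _ s) => //; left; lra.
split.
  apply: (@comp_part _ f fcont nosplit s u v t) => //; exact: subI01.
apply: (@comp_part _ f fcont nosplit v t s u) => //; exact: subI01.
Qed.
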